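(* For all integers $k\geq 2$ and $\ell\geq 2$, $$\lambda(k)\lambda(\ell)=\frac{1}{2^{\ell}}\sum_{i=0}^{k-1}2^{-i}\binom{\ell+i-1}{i}\sigma(\ell+i,k-i)+\frac{1}{2^{k}}\sum_{j=0}^{\ell-1}2^{-j}\binom{k+j-1}{j}\sigma(k+j,\ell-j).$$
   Context: For integers $t\geq 1$, $n\geq 1$ let $S_n^{(t)}=\sum_{k=1}^{n}\frac{1}{(2k-1)^t}$, and for integers $s\geq 2$, $t\geq 1$ let $\sigma(s,t)=\sum_{n\geq 1}\frac{S_n^{(t)}}{n^s}$. For real $s>1$, $\lambda(s)=\sum_{n\geq 1}\frac{1}{(2n-1)^s}$. *)

(* Defs.v *)
From Stdlib Require Import Reals.
From Coquelicot Require Import Coquelicot.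
Open Scope R_scope.

Definition S_odd (t n : nat) : R :=
  sum_n_m (fun k => / (INR (2 * k - 1)) ^ t) 1 n.

(* sigma(s,t) = sum_{n>=1} S_n^{(t)} / n^s  (index shifted: m = n-1 >= 0) *)
Definition sigmaOdd (s t : nat) : R :=
  Series (fun m => S_odd t (S m) / (INR (S m)) ^ s).

(* lambda(s) = sum_{n>=1} 1/(2n-1)^s  (index shifted: m = n-1 >= 0) *)
Definition lambdaOdd (s : nat) : R :=
  Series (fun m => / (INR (2 * m + 1)) ^ s).

Definition binomR (n k : nat) : R := Binomial.C n k.

(* Main.v *)
Require Import Defs.
From Stdlib Require Import Reals Lia Lra.
From Coquelicot Require Import Coquelicot.
Open Scope R_scope.
Lemma plusR (x y : R) : @plus R_AbelianMonoid x y = x + y. Proof. reflexivity. Qed.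

Lemma sum_Sn_R (f : nat -> R) n : sum_n f (S n) = sum_n f n + f (S n).
Proof. exact (sum_Sn f n). Qed.

Lemma sum_n_head (f : nat -> R) n : sum_n f (S n) = f O + sum_n (fun i => f (S i)) n.
Proof.
  unfold sum_n. rewrite sum_Sn_m by lia. rewrite sum_n_m_S. reflexivity.
Qed.

Lemma sum_n_plusR (f g : nat -> R) n : sum_n (fun i => f i + g i) n = sum_n f n + sum_n g n.
Proof. unfold sum_n. apply (sum_n_m_plus f g). Qed.

Lemma sum_n_multR (c : R) (f : nat -> R) n : sum_n (fun i => c * f i) n = c * sum_n f n.
Proof. unfold sum_n. apply (sum_n_m_mult_l c f). Qed.

Definition G (K L : nat) (a u : R) :=
  sum_n (fun i => Binomial.C (L+i) i * u^(L+1+i) * a^(K+1-i)) K.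

Lemma G_rec K L a u : G (S K) (S L) a u = u * G (S K) L a u + u * G K (S L) a u.
Proof.
  unfold G. rewrite !sum_n_head.
  rewrite Rmult_plus_distr_l, Rplus_assoc, <- !sum_n_multR, <- sum_n_plusR.
  f_equal.
  - rewrite !Nat.add_0_r, !C_n_0. replace (S L + 1)%nat with (S (L+1)) by lia. simpl. ring.
  - apply sum_n_ext; intro i.
    replace (S L + S i)%nat with (S (L + S i)) by lia.
    rewrite <- pascal by lia.
    replace (L + S i)%nat with (S L + i)%nat at 1 by lia.
    replace (S L + 1 + S i)%nat with (S (L + 1 + S i)) by lia.
    replace (S L + 1 + i)%nat with (L + 1 + S i)%nat by lia.
    replace (S K + 1 - S i)%nat with (K + 1 - i)%nat by lia.
    simpl. ring.
Qed.

Lemma P0 L a b u : u * (a + b) = a * b -> a^1 * b^(L+1) = G 0 L a u + G L 0 b u.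
Proof.
  intro H. unfold G. rewrite sum_O. rewrite Nat.add_0_r, C_n_0. simpl (0+1-0)%nat.
  induction L.
  - rewrite sum_O. simpl. rewrite C_n_0. lra.
  - rewrite sum_Sn_R.
    replace (a ^ 1 * b ^ (S L + 1)) with (b * (a^1 * b^(L+1))) by (rewrite <- !tech_pow_Rmult; replace (S L + 1)%nat with (S (L+1)) by lia; simpl; ring).
    rewrite IHL. rewrite Rmult_plus_distr_l.
    rewrite <- (sum_n_multR b).
    replace (sum_n (fun k : nat => b * (Binomial.C (0 + k) k * u ^ (0 + 1 + k) * b ^ (L + 1 - k))) L)
      with (sum_n (fun i : nat => Binomial.C (0 + i) i * u ^ (0 + 1 + i) * b ^ (S L + 1 - i)) L).
    2:{ apply sum_n_m_ext_loc. intros k Hk. replace (S L + 1 - k)%nat with (S (L+1-k)) by lia.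
        simpl. ring. }
    replace (S L + 1 - S L)%nat with 1%nat by lia. simpl (0 + S L)%nat. rewrite C_n_n.
    replace (S L + 1)%nat with (S (L+1)) by lia.
    replace (0 + 1 + S L)%nat with (S (L+1)) by lia.
    rewrite <- !tech_pow_Rmult. rewrite !Nat.add_0_r.
    replace (b * (1 * u ^ (L + 1) * (a * a ^ 0))) with (u^(L+1) * (a*b)) by (simpl; ring).
    rewrite <- H. simpl. ring.
Qed.

Lemma Pid K L a b u : u * (a + b) = a * b -> a^(K+1) * b^(L+1) = G K L a u + G L K b u.
Proof.
  intro H. revert L. induction K; intro L.
  - apply P0; auto.
  - induction L.
    + rewrite Rmult_comm, Rplus_comm. apply P0. rewrite (Rplus_comm b a), (Rmult_comm b a). auto.
    + rewrite G_rec, (G_rec L K b u).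
      replace (a ^ (S K + 1) * b ^ (S L + 1)) with (u * (a^(S K + 1) * b^(L+1)) + u * (a^(K+1) * b^(S L+1))).
      * rewrite IHL, IHK. ring.
      * replace (S K + 1)%nat with (S (K+1)) by lia. replace (S L + 1)%nat with (S (L+1)) by lia.
        rewrite <- !tech_pow_Rmult.
        transitivity (a^(K+1) * b^(L+1) * (u * (a+b))). ring. rewrite H. ring.
Qed.

Lemma inv_nonneg y : 0 <= y -> 0 <= / y.
Proof. intro H. destruct (Req_dec y 0) as [->|Hn]. rewrite Rinv_0; lra.
  left. apply Rinv_0_lt_compat. lra. Qed.

Lemma sum_n_nonneg (f : nat -> R) n : (forall k, 0 <= f k) -> 0 <= sum_n f n.
Proof. intro H. induction n. rewrite sum_O. auto. rewrite sum_Sn_R. specialize (H (S n)). lra. Qed.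

Lemma term_le_sum (f : nat -> R) K i : (forall k, 0 <= f k) -> (i <= K)%nat -> f i <= sum_n f K.
Proof. intros H Hi. induction K.
  - replace i with 0%nat by lia. rewrite sum_O. lra.
  - rewrite sum_Sn_R. destruct (Nat.eq_dec i (S K)) as [->|Hne].
    + pose proof (sum_n_nonneg f K H). lra.
    + specialize (IHK ltac:(lia)). specialize (H (S K)). lra.
Qed.

Lemma swap (f : nat -> nat -> R) N K :
  sum_n (fun m => sum_n (fun i => f m i) K) N = sum_n (fun i => sum_n (fun m => f m i) N) K.
Proof. induction N.
  - rewrite sum_O. apply sum_n_ext; intro i. rewrite sum_O. auto.
  - rewrite sum_Sn_R, IHN, <- sum_n_plusR. apply sum_n_ext; intro i. rewrite sum_Sn_R. auto.
Qed.

Lemma rev_sum (f : nat -> R) N : sum_n (fun m => f (N - m)%nat) N = sum_n f N.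
Proof. induction N.
  - rewrite !sum_O. auto.
  - rewrite sum_n_head, sum_Sn_R. rewrite <- IHN. simpl (S N - 0)%nat. rewrite Rplus_comm. reflexivity.
Qed.

Lemma S_odd_eq t N : S_odd t (S N) = sum_n (fun m => (/ INR (2*m+1))^t) N.
Proof. unfold S_odd, sum_n. rewrite <- sum_n_m_S. apply sum_n_m_ext; intro m.
  rewrite pow_inv. do 3 f_equal. lia. Qed.

Lemma Gsum K L N (a : nat -> R) u : sum_n (fun m => G K L (a m) u) N =
  sum_n (fun i => Binomial.C (L+i) i * u^(L+1+i) * sum_n (fun m => a m ^ (K+1-i)) N) K.
Proof. unfold G. rewrite swap. apply sum_n_ext; intro i. apply sum_n_multR. Qed.

Lemma INR_pos n : 0 < INR (2*n+1).
Proof. apply lt_0_INR. lia. Qed.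

Lemma pointwise K L N :
 sum_f_R0 (fun m => / INR (2*m+1)^(S K) * / INR (2*(N-m)+1)^(S L)) N =
 /2^(S L) * sum_n (fun i => /2^i * binomR (S L + i - 1) i * (S_odd (S K - i) (S N) / INR (S N)^(S L + i))) K
 + /2^(S K) * sum_n (fun j => /2^j * binomR (S K + j - 1) j * (S_odd (S L - j) (S N) / INR (S N)^(S K + j))) L.
Proof.
  set (u := / INR (2*N+2)).
  rewrite <- sum_n_Reals.
  transitivity (sum_n (fun m => G K L (/ INR (2*m+1)) u + G L K (/ INR (2*(N-m)+1)) u) N).
  { unfold sum_n. apply sum_n_m_ext_loc; intros m Hm.
    rewrite <- !pow_inv. replace (S K) with (K+1)%nat by lia. replace (S L) with (L+1)%nat by lia. apply Pid.
    unfold u. replace (INR (2*N+2)) with (INR (2*m+1) + INR (2*(N-m)+1)).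
    2:{ rewrite <- plus_INR. f_equal. lia. }
    pose proof (INR_pos m). pose proof (INR_pos (N-m)). field. lra. }
  rewrite sum_n_plusR, !Gsum.
  assert (Hu : forall n, u ^ n = (/2)^n * (/ INR (S N))^n).
  { intro n. unfold u. rewrite <- Rpow_mult_distr, <- Rinv_mult. do 3 f_equal.
    rewrite S_INR, plus_INR, mult_INR. simpl. ring. }
  f_equal.
  - rewrite <- sum_n_multR. apply sum_n_ext; intro i.
    rewrite <- S_odd_eq.
    replace (K+1-i)%nat with (S K - i)%nat by lia.
    replace (S L + i - 1)%nat with (L+i)%nat by lia.
    unfold binomR. rewrite Hu.
    replace (L+1+i)%nat with (S L + i)%nat by lia.
    rewrite !pow_inv, pow_add. unfold Rdiv.
    rewrite Rinv_mult. match goal with |- ?a = ?b => change (@eq R a b) end. ring.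
  - rewrite <- sum_n_multR. apply sum_n_ext; intro i.
    rewrite (rev_sum (fun m => (/ INR (2*m+1)) ^ (L+1-i))).
    rewrite <- S_odd_eq.
    replace (L+1-i)%nat with (S L - i)%nat by lia.
    replace (S K + i - 1)%nat with (K+i)%nat by lia.
    unfold binomR. rewrite Hu.
    replace (K+1+i)%nat with (S K + i)%nat by lia.
    rewrite !pow_inv, pow_add. unfold Rdiv.
    rewrite Rinv_mult. match goal with |- ?a = ?b => change (@eq R a b) end. ring.
Qed.

Lemma tel : is_series (fun n => / INR (n+1) - / INR (n+2)) 1.
Proof.
  assert (H: forall n, sum_n (fun n => / INR (n+1) - / INR (n+2)) n = 1 - / INR (n+2)).
  { induction n. rewrite sum_O. simpl. field.
    rewrite sum_Sn_R, IHn.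
    replace (S n + 1)%nat with (n+2)%nat by lia.
    lra. }
  unfold is_series.
  change (is_lim_seq (sum_n (fun n => / INR (n+1) - / INR (n+2))) 1).
  eapply is_lim_seq_ext. intros; symmetry; apply H.
  replace (Finite 1) with (Finite (1 - 0)) by (f_equal; ring).
  apply is_lim_seq_minus'. apply is_lim_seq_const.
  replace (Finite 0) with (Rbar_inv p_infty) by reflexivity.
  apply is_lim_seq_inv. 2: discriminate.
  apply (is_lim_seq_incr_n INR 2). apply is_lim_seq_INR.
Qed.

Lemma ex_series_mult_l (c : R) (a : nat -> R) : ex_series a -> ex_series (fun n => c * a n).
Proof. intro H. apply (ex_series_scal_l c a H). Qed.

Lemma lam_abs s : (2 <= s)%nat -> ex_series (fun m => Rabs (/ INR (2*m+1)^s)).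
Proof.
  intro Hs.
  apply (@ex_series_le R_AbsRing R_CompleteNormedModule _ (fun m => 2 * (/ INR (m+1) - / INR (m+2)))).
  2:{ apply ex_series_mult_l. exists 1. apply tel. }
  intro m. change (norm (Rabs (/ INR (2*m+1)^s))) with (Rabs (Rabs (/ INR (2*m+1)^s))).
  rewrite Rabs_Rabsolu.
  pose proof (INR_pos m) as Hp.
  assert (H1 : 1 <= INR (2*m+1)) by (apply (le_INR 1); lia).
  rewrite Rabs_right.
  2:{ left. apply Rinv_0_lt_compat. apply pow_lt. lra. }
  apply Rle_trans with (/ INR (2*m+1) ^ 2).
  { apply Rinv_le_contravar. apply pow_lt; lra. apply Rle_pow; auto. }
  rewrite !plus_INR, mult_INR. simpl INR.
  pose proof (pos_INR m).
  replace (2 * (/ (INR m + 1) - / (INR m + (1 + 1))))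
    with (/ ((INR m + 1) * (INR m + 2) / 2)) by (field; lra).
  apply Rinv_le_contravar. apply Rdiv_lt_0_compat; nra.
  simpl. nra.
Qed.

Lemma binom_nonneg n k : 0 <= Binomial.C n k.
Proof. unfold Binomial.C. apply Rmult_le_pos. apply pos_INR. apply inv_nonneg.
  apply Rmult_le_pos; apply pos_INR. Qed.

Lemma S_odd_nonneg t N : 0 <= S_odd t (S N).
Proof. rewrite S_odd_eq. apply sum_n_nonneg. intro k. apply pow_le. apply inv_nonneg. apply pos_INR. Qed.

Lemma T_nonneg c t N s : 0 <= c -> 0 <= c * (S_odd t (S N) / INR (S N)^s).
Proof. intro. apply Rmult_le_pos; auto. apply Rmult_le_pos. apply S_odd_nonneg.
  apply inv_nonneg. apply pow_le. apply pos_INR. Qed.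

Lemma coef_nonneg i n : 0 <= / 2 ^ i * binomR n i.
Proof. apply Rmult_le_pos. apply inv_nonneg. apply pow_le. lra. apply binom_nonneg. Qed.

Lemma Series_sum (F : nat -> nat -> R) K : (forall i, (i <= K)%nat -> ex_series (F i)) ->
  ex_series (fun N => sum_n (fun i => F i N) K) /\
  Series (fun N => sum_n (fun i => F i N) K) = sum_n (fun i => Series (F i)) K.
Proof.
  induction K; intro H.
  - rewrite sum_O. split.
    + apply (ex_series_ext (F 0%nat)). intro; rewrite sum_O; auto. apply H; lia.
    + apply Series_ext. intro; rewrite sum_O; auto.
  - destruct IHK as [IH1 IH2]. intros; apply H; lia.
    assert (E : forall N, sum_n (fun i => F i N) (S K) = sum_n (fun i => F i N) K + F (S K) N).
    { intro N. apply sum_Sn_R. }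
    split.
    + apply (ex_series_ext (fun N => plus (sum_n (fun i => F i N) K) (F (S K) N))).
      intro N; rewrite E; reflexivity.
      apply (@ex_series_plus R_AbsRing R_NormedModule (fun N => sum_n (fun i => F i N) K) (F (S K))); auto.
    + rewrite (Series_ext _ _ E), Series_plus; auto. rewrite sum_Sn_R, IH2. reflexivity.
Qed.

Theorem mainTheorem14 (k l : nat) (hk : (2 <= k)%nat) (hl : (2 <= l)%nat) :
  lambdaOdd k * lambdaOdd l =
    / 2 ^ l * sum_n_m (fun i => / 2 ^ i * binomR (l + i - 1)%nat i * sigmaOdd (l + i)%nat (k - i)%nat) 0 (k - 1)%nat
  + / 2 ^ k * sum_n_m (fun j => / 2 ^ j * binomR (k + j - 1)%nat j * sigmaOdd (k + j)%nat (l - j)%nat) 0 (l - 1)%nat.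
Proof.
  destruct k as [|K]; [lia|]. destruct l as [|L]; [lia|].
  replace (S K - 1)%nat with K by lia. replace (S L - 1)%nat with L by lia.
  set (D := fun N => sum_f_R0 (fun m => / INR (2*m+1)^(S K) * / INR (2*(N-m)+1)^(S L)) N).
  assert (HD : is_series D (lambdaOdd (S K) * lambdaOdd (S L))).
  { eapply is_series_ext; [intro N; unfold D; reflexivity|].
    apply (is_series_mult (fun m => / INR (2*m+1)^(S K)) (fun m => / INR (2*m+1)^(S L))).
    - apply Series_correct. apply ex_series_Rabs. apply lam_abs; auto.
    - apply Series_correct. apply ex_series_Rabs. apply lam_abs; auto.
    - apply lam_abs; auto.
    - apply lam_abs; auto. }
  set (F1 := fun i N => / 2^i * binomR (S L + i - 1) i * (S_odd (S K - i) (S N) / INR (S N)^(S L + i))).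
  set (F2 := fun j N => / 2^j * binomR (S K + j - 1) j * (S_odd (S L - j) (S N) / INR (S N)^(S K + j))).
  assert (HP : forall N, D N = / 2^(S L) * sum_n (fun i => F1 i N) K + / 2^(S K) * sum_n (fun j => F2 j N) L).
  { intro N. unfold D, F1, F2. apply pointwise. }
  assert (HF1 : forall i N, 0 <= F1 i N) by (intros; apply T_nonneg, coef_nonneg).
  assert (HF2 : forall i N, 0 <= F2 i N) by (intros; apply T_nonneg, coef_nonneg).
  assert (H2K : 0 < 2 ^ S K) by (apply pow_lt; lra).
  assert (H2L : 0 < 2 ^ S L) by (apply pow_lt; lra).
  assert (HexD : ex_series D) by (eexists; eauto).
  assert (Ex1 : forall i, (i <= K)%nat -> ex_series (F1 i)).
  { intros i Hi. apply (@ex_series_le R_AbsRing R_CompleteNormedModule _ (fun N => 2^(S L) * D N)).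
    2: apply ex_series_mult_l, HexD.
    intro N. change (norm (F1 i N)) with (Rabs (F1 i N)). rewrite Rabs_right by (apply Rle_ge; auto).
    rewrite HP.
    pose proof (term_le_sum (fun i => F1 i N) K i (fun k => HF1 k N) Hi).
    pose proof (sum_n_nonneg (fun j => F2 j N) L (fun k => HF2 k N)).
    assert (0 <= / 2 ^ S K * sum_n (fun j : nat => F2 j N) L) by (apply Rmult_le_pos; auto; left; apply Rinv_0_lt_compat; auto).
    rewrite Rmult_plus_distr_l, <- Rmult_assoc, Rinv_r by lra.
    assert (0 <= 2 ^ S L * (/ 2 ^ S K * sum_n (fun j : nat => F2 j N) L)) by (apply Rmult_le_pos; lra).
    simpl in *. lra. }
  assert (Ex2 : forall i, (i <= L)%nat -> ex_series (F2 i)).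
  { intros i Hi. apply (@ex_series_le R_AbsRing R_CompleteNormedModule _ (fun N => 2^(S K) * D N)).
    2: apply ex_series_mult_l, HexD.
    intro N. change (norm (F2 i N)) with (Rabs (F2 i N)). rewrite Rabs_right by (apply Rle_ge; auto).
    rewrite HP.
    pose proof (term_le_sum (fun i => F2 i N) L i (fun k => HF2 k N) Hi).
    pose proof (sum_n_nonneg (fun j => F1 j N) K (fun k => HF1 k N)).
    assert (0 <= / 2 ^ S L * sum_n (fun j : nat => F1 j N) K) by (apply Rmult_le_pos; auto; left; apply Rinv_0_lt_compat; auto).
    rewrite Rmult_plus_distr_l, (Rplus_comm (2 ^ S K * _)), <- (Rmult_assoc (2 ^ S K) (/ 2 ^ S K)), Rinv_r by lra.
    assert (0 <= 2 ^ S K * (/ 2 ^ S L * sum_n (fun j : nat => F1 j N) K)) by (apply Rmult_le_pos; lra).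
    simpl in *. lra. }
  destruct (Series_sum F1 K Ex1) as [S1e S1].
  destruct (Series_sum F2 L Ex2) as [S2e S2].
  rewrite <- (is_series_unique _ _ HD).
  rewrite (Series_ext _ _ HP).
  rewrite Series_plus by (apply ex_series_mult_l; auto).
  rewrite !Series_scal_l, S1, S2.
  f_equal; f_equal; apply sum_n_m_ext; intro i; unfold F1, F2;
    rewrite Series_scal_l; reflexivity.
Qed.
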